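(* Let $X\subset[0,1]$ with a $\sigma$-algebra $\mathcal F$ containing the Borel subsets of $X$, let $\mu\colon\mathcal F\to[0,1]$ be a monotone measure, let $A\in\mathcal F$, and let $f\colon X\to[0,1]$ be a non-decreasing measurable function. Writing $N(\phi)=\sup_{\alpha\in[0,1]}\alpha\,\mu(A\cap\{\phi\ge\alpha\})$ for the Shilkret integral of a measurable $\phi\colon X\to[0,1]$ over $A$, and $K=\mu(A)\cdot N(x)$ (where $N(x)$ is the Shilkret integral of the identity function $x\mapsto x$), if $K>0$ then $$N(f)\le \frac{1}{\sqrt K}\,\big(N(f^2)\big)^{1/4}\big(N(x^2f^2)\big)^{1/4}.$$
   Context: A monotone measure is a map $\mu$ on $\mathcal F$ with $\mu(\emptyset)=0$, $\mu(X)>0$ and $\mu(A)\le\mu(B)$ whenever $A\subset B$. Here $\{\phi\ge\alpha\}=\{x\in X:\phi(x)\ge\alpha\}$, and $x^2f^2$ denotes the function $x\mapsto x^2 f(x)^2$. *)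

(* Defs.v *)
From Stdlib Require Import Reals Lra ClassicalEpsilon.
Open Scope R_scope.

Definition sigma_algebra (X : R -> Prop) (F : (R -> Prop) -> Prop) : Prop :=
  (forall S, F S -> forall x, S x -> X x) /\
  F X /\
  (forall S, F S -> F (fun x => X x /\ ~ S x)) /\
  (forall Sn : nat -> R -> Prop, (forall n, F (Sn n)) -> F (fun x => exists n, Sn n x)).

Inductive borel : (R -> Prop) -> Prop :=
| borel_ge (a : R) : borel (fun x => a <= x)
| borel_compl (S : R -> Prop) : borel S -> borel (fun x => ~ S x)
| borel_union (Sn : nat -> R -> Prop) :
    (forall n, borel (Sn n)) -> borel (fun x => exists n, Sn n x).

Definition monotone_measure (X : R -> Prop) (F : (R -> Prop) -> Prop)
    (mu : (R -> Prop) -> R) : Prop :=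
  (forall S, F S -> 0 <= mu S <= 1) /\
  mu (fun _ => False) = 0 /\
  0 < mu X /\
  (forall S T, F S -> F T -> (forall x, S x -> T x) -> mu S <= mu T).

Definition measurable (X : R -> Prop) (F : (R -> Prop) -> Prop) (phi : R -> R) : Prop :=
  forall B, borel B -> F (fun x => X x /\ B (phi x)).

Definition shilkret_set (mu : (R -> Prop) -> R) (A : R -> Prop) (phi : R -> R) (y : R) : Prop :=
  exists a, 0 <= a <= 1 /\ y = a * mu (fun x => A x /\ a <= phi x).

Definition shilkret (mu : (R -> Prop) -> R) (A : R -> Prop) (phi : R -> R) : R :=
  epsilon (inhabits 0) (fun s => is_lub (shilkret_set mu A phi) s).

(* Main.v *)
Require Import Defs.
From Stdlib Require Import Reals.
From Stdlib Require Import Lra Psatz Classical ClassicalEpsilon FunctionalExtensionality PropExtensionality.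
Open Scope R_scope.

Lemma pred_ext (P Q : R -> Prop) : (forall x, P x <-> Q x) -> P = Q.
Proof. intros H; apply functional_extensionality; intro x; apply propositional_extensionality; auto. Qed.

Lemma interF (X : R -> Prop) (F : (R -> Prop) -> Prop) (S T : R -> Prop) :
  sigma_algebra X F -> F S -> F T -> F (fun x => S x /\ T x).
Proof.
  intros [Hsub [HX [Hc Hu]]] HS HT.
  set (Sn := fun (n : nat) => match n with O => fun x => X x /\ ~ S x | _ => fun x => X x /\ ~ T x end).
  replace (fun x => S x /\ T x) with (fun x => X x /\ ~ (fun x => exists n, Sn n x) x).
  - apply Hc, Hu. intros [|n]; simpl; apply Hc; auto.
  - apply pred_ext; intro x; split.
    + intros [Xx Hn]. split; apply NNPP; intro H; apply Hn.
      * exists O; simpl; auto.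
      * exists 1%nat; simpl; auto.
    + intros [Sx Tx]. split; [eapply Hsub; eauto|]. intros [[|n] Hn]; simpl in Hn; tauto.
Qed.

Lemma upF (X : R -> Prop) (F : (R -> Prop) -> Prop) :
  (forall x, X x -> 0 <= x <= 1) ->
  sigma_algebra X F ->
  (forall B, borel B -> F (fun x => X x /\ B x)) ->
  forall U : R -> Prop, (forall x, U x -> X x) ->
  (forall x y, U x -> X y -> x <= y -> U y) -> F U.
Proof.
  intros HX HF HB U HU Hup.
  destruct (classic (exists u, U u)) as [[u0 Hu0]|Hne].
  - set (E := fun y => forall u, U u -> y <= u).
    destruct (completeness E) as [c [Hc1 Hc2]].
    + exists u0. intros y Hy. apply Hy, Hu0.
    + exists 0. intros u Hu. apply HX, HU, Hu.
    + assert (Hcu: forall u, U u -> c <= u).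
      { intros u Hu. apply Hc2. intros y Hy. apply Hy, Hu. }
      assert (Hd: forall d, c < d -> exists u, U u /\ u < d).
      { intros d Hd. apply NNPP. intros Hn. assert (E d) as H.
        { intros u Hu. destruct (Rle_lt_dec d u); auto. exfalso; apply Hn; eauto. }
        specialize (Hc1 d H). lra. }
      destruct (classic (U c)) as [Uc|nUc].
      * replace U with (fun x => X x /\ (fun x => c <= x) x).
        { apply HB, borel_ge. }
        apply pred_ext; intro x; split.
        -- intros [Xx Hx]. eapply Hup; eauto.
        -- intros Hx; split; auto.
      * replace U with (fun x => X x /\ (fun x => exists n:nat, (fun n x => c + / (INR n + 1) <= x) n x) x).
        { apply HB, borel_union. intros n; apply borel_ge. }
        apply pred_ext; intro x; split.
        -- intros [Xx [n Hn]].
           assert (c < x).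
           { pose proof (pos_INR n). assert (0 < /(INR n+1)) by (apply Rinv_0_lt_compat; lra). lra. }
           destruct (Hd x H) as [u [Uu ux]]. eapply Hup; eauto; lra.
        -- intros Ux. split; [auto|].
           assert (c < x).
           { destruct (Rle_lt_or_eq_dec c x (Hcu x Ux)); auto. subst; contradiction. }
           destruct (archimed_cor1 (x - c)) as [N [HN1 HN2]]; [lra|]. exists N.
           assert (0 < INR N) by (apply lt_0_INR; auto).
           assert (/ (INR N + 1) <= / INR N) by (apply Rinv_le_contravar; lra).
           lra.
  - replace U with (fun x => X x /\ ~ X x).
    + destruct HF as [_ [HX' [Hc _]]]. apply Hc, HX'.
    + apply pred_ext; intro x; split.
      * tauto.
      * intros Ux. exfalso; apply Hne; eauto.
Qed.

Lemma levelF (X : R -> Prop) (F : (R -> Prop) -> Prop) (A : R -> Prop) (g : R -> R) (a : R) :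
  (forall x, X x -> 0 <= x <= 1) ->
  sigma_algebra X F ->
  (forall B, borel B -> F (fun x => X x /\ B x)) ->
  F A -> (forall x y, X x -> X y -> x <= y -> g x <= g y) ->
  F (fun x => A x /\ a <= g x).
Proof.
  intros HX HF HB HA Hg.
  replace (fun x => A x /\ a <= g x) with (fun x => A x /\ (fun x => X x /\ a <= g x) x).
  - apply (interF X); auto. apply (upF X); auto.
    + tauto.
    + intros x y [Xx Hx] Xy Hxy. split; auto. apply Rle_trans with (g x); auto.
  - apply pred_ext; intro x; split; [tauto|]. intros [Ax Hx]; split; auto. split; auto.
    destruct HF as [Hs _]. eapply Hs; eauto.
Qed.

Lemma shilkret_lub (F : (R -> Prop) -> Prop) (mu : (R -> Prop) -> R) (A : R -> Prop) (phi : R -> R) :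
  (forall S, F S -> 0 <= mu S <= 1) ->
  (forall a, F (fun x => A x /\ a <= phi x)) ->
  is_lub (shilkret_set mu A phi) (shilkret mu A phi).
Proof.
  intros Hmu HF. unfold shilkret. apply epsilon_spec.
  destruct (completeness (shilkret_set mu A phi)) as [c Hc].
  - exists 1. intros y [a [Ha ->]]. specialize (Hmu _ (HF a)). nra.
  - exists 0, 0. split; [lra|ring].
  - exists c; exact Hc.
Qed.

Theorem mainTheorem2 (X : R -> Prop) (F : (R -> Prop) -> Prop)
  (mu : (R -> Prop) -> R) (A : R -> Prop) (f : R -> R) :
  (forall x, X x -> 0 <= x <= 1) ->
  sigma_algebra X F ->
  (forall B, borel B -> F (fun x => X x /\ B x)) ->
  monotone_measure X F mu ->
  F A ->
  (forall x, X x -> 0 <= f x <= 1) ->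
  (forall x y, X x -> X y -> x <= y -> f x <= f y) ->
  measurable X F f ->
  0 < mu A * shilkret mu A (fun x => x) ->
  shilkret mu A f <=
    / sqrt (mu A * shilkret mu A (fun x => x))
    * sqrt (sqrt (shilkret mu A (fun x => f x ^ 2)))
    * sqrt (sqrt (shilkret mu A (fun x => x ^ 2 * f x ^ 2))).
Proof.
  intros HX HF HB [Hmu [Hm0 [HmX Hmon]]] HA Hf01 Hfm Hmeas HK.
  assert (Hsub: forall x, A x -> X x) by (destruct HF as [Hs _]; intros; eapply Hs; eauto).
  assert (mx: forall x y, X x -> X y -> x <= y -> (fun x => x) x <= (fun x => x) y) by auto.
  assert (mf2: forall x y, X x -> X y -> x <= y -> (fun x => f x ^ 2) x <= (fun x => f x ^ 2) y).
  { intros x y Xx Xy Hxy. simpl. pose proof (Hf01 x Xx). pose proof (Hfm x y Xx Xy Hxy). nra. }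
  assert (mxf: forall x y, X x -> X y -> x <= y -> (fun x => x ^ 2 * f x ^ 2) x <= (fun x => x ^ 2 * f x ^ 2) y).
  { intros x y Xx Xy Hxy. simpl. pose proof (Hf01 x Xx). pose proof (Hf01 y Xy).
    pose proof (HX x Xx). pose proof (Hfm x y Xx Xy Hxy).
    assert (x * f x <= y * f y) by nra. assert (0 <= x * f x) by nra. nra. }
  assert (Lf := shilkret_lub F mu A f Hmu (fun a => levelF X F A f a HX HF HB HA Hfm)).
  assert (Lx := shilkret_lub F mu A _ Hmu (fun a => levelF X F A _ a HX HF HB HA mx)).
  assert (L1 := shilkret_lub F mu A _ Hmu (fun a => levelF X F A _ a HX HF HB HA mf2)).
  assert (L2 := shilkret_lub F mu A _ Hmu (fun a => levelF X F A _ a HX HF HB HA mxf)).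
  set (Nf := shilkret mu A f) in *.
  set (Nx := shilkret mu A (fun x => x)) in *.
  set (P1 := shilkret mu A (fun x => f x ^ 2)) in *.
  set (P2 := shilkret mu A (fun x => x ^ 2 * f x ^ 2)) in *.
  assert (HmA := Hmu A HA).
  assert (Z0: forall g, shilkret_set mu A g 0) by (intros g; exists 0; split; [lra|ring]).
  assert (Nx0: 0 <= Nx) by (apply (proj1 Lx), Z0).
  assert (P10: 0 <= P1) by (apply (proj1 L1), Z0).
  assert (P20: 0 <= P2) by (apply (proj1 L2), Z0).
  apply (proj2 Lf). intros y [a [Ha ->]].
  set (m := mu (fun x => A x /\ a <= f x)).
  assert (Fm := levelF X F A f a HX HF HB HA Hfm).
  assert (Hm := Hmu _ Fm). fold m in Hm.
  assert (H1: a ^ 2 * m <= P1).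
  { apply Rle_trans with (a ^ 2 * mu (fun x => A x /\ a ^ 2 <= (fun x => f x ^ 2) x)).
    - apply Rmult_le_compat_l; [nra|]. apply Hmon; auto.
      + apply (levelF X F A _ _ HX HF HB HA mf2).
      + intros x [Ax Hx]; split; auto. simpl. pose proof (Hf01 x (Hsub x Ax)). nra.
    - apply (proj1 L1). exists (a ^ 2); split; [nra|reflexivity]. }
  assert (Hb: forall b, 0 <= b <= 1 -> a ^ 2 * m * (b * mu (fun x => A x /\ b <= x)) ^ 2 <= P2).
  { intros b Hb. set (n := mu (fun x => A x /\ b <= x)).
    assert (Fn := levelF X F A _ b HX HF HB HA mx).
    assert (Hn := Hmu _ Fn). change (0 <= n <= 1) in Hn.
    set (T := mu (fun x => A x /\ a ^ 2 * b ^ 2 <= (fun x => x ^ 2 * f x ^ 2) x)).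
    assert (FT := levelF X F A _ (a ^ 2 * b ^ 2) HX HF HB HA mxf).
    assert (HT: a ^ 2 * b ^ 2 * T <= P2).
    { apply (proj1 L2). exists (a ^ 2 * b ^ 2); split; [split; [nra|]; assert (a^2 <= 1) by nra; assert (b^2<=1) by nra; assert (0 <= a^2) by nra; nra|reflexivity]. }
    assert (Htgt: forall x, A x -> a <= f x -> b <= x -> a ^ 2 * b ^ 2 <= x ^ 2 * f x ^ 2).
    { intros x Ax H1x H2x. pose proof (Hf01 x (Hsub x Ax)). pose proof (HX x (Hsub x Ax)). assert (a * b <= x * f x) by (rewrite (Rmult_comm x); apply Rmult_le_compat; lra). assert (0 <= a * b) by nra. replace (a ^ 2 * b ^ 2) with ((a * b) * (a * b)) by ring. replace (x ^ 2 * f x ^ 2) with ((x * f x) * (x * f x)) by ring. apply Rmult_le_compat; lra. }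
    assert (HmnT: m * n <= T).
    { destruct (classic (forall x, A x /\ a <= f x -> b <= x)) as [Hc|Hc].
      - assert (m <= T).
        { apply Hmon; auto. intros x [Ax Hx]; split; auto. }
        apply Rle_trans with m; auto. rewrite <- (Rmult_1_r m) at 2. apply Rmult_le_compat_l; lra.
      - apply not_all_ex_not in Hc. destruct Hc as [u Hu].
        apply imply_to_and in Hu. destruct Hu as [[Au Hau] Hbu].
        assert (n <= T).
        { apply Hmon; auto. intros x [Ax Hx]; split; auto. apply Htgt; auto.
          apply Rle_trans with (f u); auto. apply Hfm; auto; lra. }
        nra. }
    assert (a ^ 2 * m * (b * n) ^ 2 <= a ^ 2 * b ^ 2 * (m * n)).
    { assert (0 <= a ^ 2 * b ^ 2 * m * n) by (apply Rmult_le_pos; [|lra]; apply Rmult_le_pos; [|lra]; nra). nra. }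
    assert (a ^ 2 * b ^ 2 * (m * n) <= a ^ 2 * b ^ 2 * T) by (apply Rmult_le_compat_l; [nra|lra]).
    lra. }
  assert (H2: a ^ 2 * m * Nx ^ 2 <= P2).
  { destruct (Req_dec (a ^ 2 * m) 0) as [E|E].
    - rewrite E; lra.
    - assert (c0: 0 < a ^ 2 * m) by (assert (0 <= a ^ 2 * m) by nra; lra).
      assert (Nx <= sqrt (P2 / (a ^ 2 * m))).
      { apply (proj2 Lx). intros y [b [Hb0 ->]].
        assert (0 <= mu (fun x => A x /\ b <= x)) by (apply Hmu, (levelF X F A _ b HX HF HB HA mx)).
        rewrite <- (sqrt_pow2 (b * mu (fun x => A x /\ b <= x))) by nra.
        apply sqrt_le_1_alt. apply Rmult_le_reg_l with (a ^ 2 * m); auto.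
        replace (a ^ 2 * m * (P2 / (a ^ 2 * m))) with P2 by (unfold Rdiv; rewrite Rmult_comm, Rmult_assoc, Rinv_l; [ring|exact E]). specialize (Hb b Hb0). exact Hb. }
      assert (Nx ^ 2 <= P2 / (a ^ 2 * m)).
      { assert (0 <= P2 / (a ^ 2 * m)) by (unfold Rdiv; apply Rmult_le_pos; [lra|apply Rlt_le, Rinv_0_lt_compat; lra]).
        pose proof (sqrt_sqrt (P2 / (a ^ 2 * m)) H0). pose proof (sqrt_pos (P2 / (a ^ 2 * m))). nra. }
      apply Rmult_le_reg_l with (/ (a ^ 2 * m)); [apply Rinv_0_lt_compat; lra|].
      rewrite <- Rmult_assoc, Rinv_l, Rmult_1_l by exact E.
      unfold Rdiv in H0. lra. }
  assert (HmA1 : 0 < mu A) by (destruct (Rle_lt_or_eq_dec 0 (mu A) (proj1 HmA)); auto; subst; rewrite <- e in HK; lra).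
  set (r := sqrt (mu A * Nx)).
  set (s1 := sqrt (sqrt P1)). set (s2 := sqrt (sqrt P2)).
  assert (r0: 0 < r) by (apply sqrt_lt_R0; auto).
  assert (r2: r * r = mu A * Nx) by (apply sqrt_sqrt; lra).
  assert (s10: 0 <= s1) by apply sqrt_pos.
  assert (s20: 0 <= s2) by apply sqrt_pos.
  assert (s14: (s1 * s1) * (s1 * s1) = P1).
  { unfold s1. rewrite sqrt_sqrt by apply sqrt_pos. apply sqrt_sqrt; lra. }
  assert (s24: (s2 * s2) * (s2 * s2) = P2).
  { unfold s2. rewrite sqrt_sqrt by apply sqrt_pos. apply sqrt_sqrt; lra. }
  assert (Key: a * m * r <= s1 * s2).
  { apply Rnot_lt_le. intro Hlt.
    set (u := s1 * s2) in *. set (v := a * m * r) in *.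
    assert (u0: 0 <= u) by (apply Rmult_le_pos; auto).
    assert (u4: (u * u) * (u * u) = P1 * P2) by (unfold u; rewrite <- s14, <- s24; ring).
    assert (uv: (u * u) * (u * u) < (v * v) * (v * v)).
    { assert (u * u < v * v) by nra. assert (0 <= u * u) by nra. nra. }
    assert (v4: (v * v) * (v * v) = a ^ 4 * m ^ 4 * (mu A * Nx) ^ 2) by (unfold v; rewrite <- r2; ring).
    assert (P1 * P2 >= (a ^ 2 * m) * (a ^ 2 * m * Nx ^ 2)).
    { assert (0 <= a ^ 2 * m) by nra. apply Rle_ge, Rmult_le_compat; try nra. }
    assert (m ^ 2 * mu A ^ 2 <= 1).
    { assert (m ^ 2 <= 1) by nra. assert (mu A ^ 2 <= 1) by nra. nra. }
    assert (0 <= a ^ 4 * m ^ 2 * Nx ^ 2) by (assert (0 <= a ^ 4) by nra; assert (0 <= m^2) by nra; assert (0 <= Nx^2) by nra; apply Rmult_le_pos; [apply Rmult_le_pos|]; auto).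
    assert (a ^ 4 * m ^ 4 * (mu A * Nx) ^ 2 <= a ^ 4 * m ^ 2 * Nx ^ 2).
    { replace (a ^ 4 * m ^ 4 * (mu A * Nx) ^ 2) with ((a ^ 4 * m ^ 2 * Nx ^ 2) * (m ^ 2 * mu A ^ 2)) by ring. nra. }
    assert ((a ^ 2 * m) * (a ^ 2 * m * Nx ^ 2) = a ^ 4 * m ^ 2 * Nx ^ 2) by ring.
    lra. }
  apply Rmult_le_reg_l with r; auto.
  replace (r * (/ r * s1 * s2)) with (s1 * s2) by (field; lra).
  lra.
Qed.
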